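(* Let $\kappa\in[0,1)$. Define $S_{q,\kappa}$ as the supremum of $$S=\langle\psi|A_0\otimes B_{0,0}|\psi\rangle+\langle\psi|A_0\otimes B_{1,0}|\psi\rangle+\langle\psi|A_1\otimes B_{0,1}|\psi\rangle-\langle\psi|A_1\otimes B_{1,1}|\psi\rangle$$ over all finite-dimensional Hilbert spaces $H_A,H_B$, unit vectors $|\psi\rangle\in H_A\otimes H_B$, binary observables $A_0,A_1$ on $H_A$ and binary observables $B_{y,x}$ ($x,y\in\{0,1\}$) on $H_B$ satisfying $\|B_{y,0}-B_{y,1}\|\le2\kappa$ for $y\in\{0,1\}$ (operator norm). Then $$S_{q,\kappa}=\begin{cases}2\sqrt2\big(\kappa+\sqrt{1-\kappa^2}\big),&\kappa\in[0,\tfrac1{\sqrt2}],\\ 4,&\kappa\in[\tfrac1{\sqrt2},1).\end{cases}$$ This value is attained with $|\psi\rangle=\frac1{\sqrt2}(|00\rangle+|11\rangle)$, $A_0=\sigma_z$, $A_1=\sigma_x$ and: for $\kappa\in[0,1/\sqrt2]$, $B_{0,0}=\frac{-\kappa+\sqrt{1-\kappa^2}}{\sqrt2}\sigma_x+\frac{\kappa+\sqrt{1-\kappa^2}}{\sqrt2}\sigma_z$, $B_{0,1}=\frac{\kappa+\sqrt{1-\kappa^2}}{\sqrt2}\sigma_x+\frac{-\kappa+\sqrt{1-\kappa^2}}{\sqrt2}\sigma_z$, $B_{1,0}=\frac{\kappa-\sqrt{1-\kappa^2}}{\sqrt2}\sigma_x+\frac{\kappa+\sqrt{1-\kappa^2}}{\sqrt2}\sigma_z$,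 $B_{1,1}=\frac{-\kappa-\sqrt{1-\kappa^2}}{\sqrt2}\sigma_x+\frac{-\kappa+\sqrt{1-\kappa^2}}{\sqrt2}\sigma_z$; for $\kappa\in[1/\sqrt2,1)$, $B_{0,0}=B_{1,0}=\sigma_z$, $B_{0,1}=\sigma_x$, $B_{1,1}=-\sigma_x$.
   Context: A binary observable on a Hilbert space $H$ is an operator $O=\Pi^0-\Pi^1$ where $\{\Pi^0,\Pi^1\}$ is a two-outcome POVM on $H$ (equivalently a Hermitian $O$ with $-\mathbb 1\le O\le\mathbb 1$); outcome $0$ corresponds to $+1$. $B_{y,x}$ is Bob's observable for his input $y$ when Alice's input $x$ is leaked to him; the constraint $\|B_{y,0}-B_{y,1}\|\le 2\kappa$ expresses that at most $\kappa$ of Alice's input information leaks to Bob. $\sigma_x,\sigma_z$ are the Pauli matrices. *)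

(* Defs.v *)
(* R : rcfType, complex scalars C := R[i] (mathcomp-real-closed),
   Hilbert spaces C^m, tensor product = Kronecker product (mxtens). *)
From mathcomp Require Import all_boot all_order all_algebra.
From mathcomp Require Export complex mxtens.
Set Implicit Arguments. Unset Strict Implicit. Unset Printing Implicit Defensive.
Import Order.TTheory GRing.Theory Num.Theory.
Local Open Scope ring_scope.
Local Open Scope complex_scope.

Section QDefs.
Variable R : rcfType.
Local Notation C := R[i].

Definition adjmx {m n : nat} (M : 'M[C]_(m, n)) : 'M[C]_(n, m) :=
  (map_mx Num.conj M)^T.

Definition hermitian {n : nat} (M : 'M[C]_n) : Prop := adjmx M = M.

Definition psd {n : nat} (M : 'M[C]_n) : Prop :=
  hermitian M /\ forall v : 'cV[C]_n, 0 <= (adjmx v *m M *m v) 0 0.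

Definition binary_observable {n : nat} (O : 'M[C]_n) : Prop :=
  exists P0 P1 : 'M[C]_n, [/\ psd P0, psd P1, P0 + P1 = 1%:M & O = P0 - P1].

Definition vnorm {n : nat} (v : 'cV[C]_n) : R :=
  Num.sqrt (complex.Re ((adjmx v *m v) 0 0)).

Definition opnorm_le {n : nat} (M : 'M[C]_n) (c : R) : Prop :=
  forall v : 'cV[C]_n, vnorm (M *m v) <= c * vnorm v.

Definition unit_vector {n : nat} (v : 'cV[C]_n) : Prop :=
  (adjmx v *m v) 0 0 = 1.

Definition expect {n : nat} (psi : 'cV[C]_n) (X : 'M[C]_n) : C :=
  (adjmx psi *m X *m psi) 0 0.

(* The functional S.  Indices: B y x with y = Bob's input, x = leaked input of
   Alice; false encodes 0 and true encodes 1. *)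
Definition S_val {m n : nat} (psi : 'cV[C]_(m * n)) (A0 A1 : 'M[C]_m)
    (B : bool -> bool -> 'M[C]_n) : C :=
  expect psi (A0 *t B false false) + expect psi (A0 *t B true false)
  + expect psi (A1 *t B false true) - expect psi (A1 *t B true true).

Definition sigma_x : 'M[C]_2 := \matrix_(i, j) (i != j)%:R.
Definition sigma_z : 'M[C]_2 :=
  \matrix_(i, j) (if i == j then (if i == 0 then 1 else -1) else 0).

Definition ket (i : 'I_2) : 'cV[C]_2 := delta_mx i 0.

Definition phi_plus : 'cV[C]_(2 * 2) :=
  ((Num.sqrt 2)^-1)%:C *: (ket 0 *t ket 0 + ket 1 *t ket 1).

Definition S_q (k : R) : R :=
  if k <= (Num.sqrt 2)^-1
  then 2 * Num.sqrt 2 * (k + Num.sqrt (1 - k ^+ 2))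
  else 4.

Definition B_opt (k : R) (y x : bool) : 'M[C]_2 :=
  let s := Num.sqrt (1 - k ^+ 2) in
  let r := Num.sqrt 2 in
  if k <= r^-1 then
    match y, x with
    | false, false => ((- k + s) / r)%:C *: sigma_x + ((k + s) / r)%:C *: sigma_z
    | false, true  => ((k + s) / r)%:C *: sigma_x + ((- k + s) / r)%:C *: sigma_z
    | true, false  => ((k - s) / r)%:C *: sigma_x + ((k + s) / r)%:C *: sigma_z
    | true, true   => ((- k - s) / r)%:C *: sigma_x + ((- k + s) / r)%:C *: sigma_z
    end
  else
    match y, x with
    | _, false => sigma_z
    | false, true => sigma_x
    | true, true => - sigma_x
    end.

End QDefs.

(* Main.v *)
Require Import Defs.
From mathcomp Require Import all_boot all_order all_algebra.
From mathcomp Require Import complex mxtens.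
From mathcomp Require Import ring lra.
Import Order.TTheory GRing.Theory Num.Theory.
Local Open Scope ring_scope.
Local Open Scope complex_scope.

Set Implicit Arguments. Unset Strict Implicit.

Section Q.
Variable R : rcfType.
Local Notation C := R[i].

Definition ip {N : nat} (u v : 'cV[C]_N) : C := (adjmx u *m v) 0 0.
Definition n2 {N : nat} (v : 'cV[C]_N) : R := complex.Re (ip v v).

Lemma ipE N (u v : 'cV[C]_N) : ip u v = \sum_i Num.conj (u i 0) * v i 0.
Proof. by rewrite /ip /adjmx !mxE; apply: eq_bigr => i _; rewrite !mxE. Qed.

Lemma adjmxM m n p (A : 'M[C]_(m,n)) (B : 'M[C]_(n,p)) :
  adjmx (A *m B) = adjmx B *m adjmx A.
Proof. by rewrite /adjmx map_mxM trmx_mul. Qed.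

Lemma adjmxK m n (A : 'M[C]_(m,n)) : adjmx (adjmx A) = A.
Proof. by apply/matrixP=> i j; rewrite !mxE conjCK. Qed.

Lemma adjmxD m n (A B : 'M[C]_(m,n)) : adjmx (A + B) = adjmx A + adjmx B.
Proof. by apply/matrixP=> i j; rewrite !mxE rmorphD. Qed.

Lemma adjmxN m n (A : 'M[C]_(m,n)) : adjmx (- A) = - adjmx A.
Proof. by apply/matrixP=> i j; rewrite !mxE rmorphN. Qed.

Lemma adjmxB m n (A B : 'M[C]_(m,n)) : adjmx (A - B) = adjmx A - adjmx B.
Proof. by rewrite adjmxD adjmxN. Qed.

Lemma adjmx1 n : adjmx (1%:M : 'M[C]_n) = 1%:M.
Proof. by apply/matrixP=> i j; rewrite !mxE rmorph_nat eq_sym. Qed.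

Lemma adjmxT m n p q (A : 'M[C]_(m,n)) (B : 'M[C]_(p,q)) :
  adjmx (A *t B) = adjmx A *t adjmx B.
Proof. by rewrite /adjmx map_mxT trmx_tens. Qed.

Lemma adjmx00 (A : 'M[C]_1) : adjmx A 0 0 = Num.conj (A 0 0).
Proof. by rewrite !mxE. Qed.

Lemma ipC N (u v : 'cV[C]_N) : ip v u = Num.conj (ip u v).
Proof. by rewrite /ip -adjmx00 adjmxM adjmxK. Qed.

Lemma ipM N M (u v : 'cV[C]_N) : ip (M *m u) v = ip u (adjmx M *m v).
Proof. by rewrite /ip adjmxM mulmxA. Qed.

Lemma ipDl N (u v w : 'cV[C]_N) : ip (u + v) w = ip u w + ip v w.
Proof. by rewrite /ip adjmxD mulmxDl mxE. Qed.
Lemma ipDr N (u v w : 'cV[C]_N) : ip w (u + v) = ip w u + ip w v.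
Proof. by rewrite /ip mulmxDr mxE. Qed.
Lemma ipNl N (u w : 'cV[C]_N) : ip (- u) w = - ip u w.
Proof. by rewrite /ip adjmxN mulNmx mxE. Qed.
Lemma ipNr N (u w : 'cV[C]_N) : ip w (- u) = - ip w u.
Proof. by rewrite /ip mulmxN mxE. Qed.
Lemma ipBl N (u v w : 'cV[C]_N) : ip (u - v) w = ip u w - ip v w.
Proof. by rewrite ipDl ipNl. Qed.
Lemma ipBr N (u v w : 'cV[C]_N) : ip w (u - v) = ip w u - ip w v.
Proof. by rewrite ipDr ipNr. Qed.
Lemma ipZl N c (u w : 'cV[C]_N) : ip (c *: u) w = Num.conj c * ip u w.
Proof.
rewrite !ipE mulr_sumr; apply: eq_bigr => i _; rewrite !mxE rmorphM /=.
by rewrite mulrA.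
Qed.
Lemma ipZr N c (u w : 'cV[C]_N) : ip w (c *: u) = c * ip w u.
Proof.
rewrite !ipE mulr_sumr; apply: eq_bigr => i _; rewrite !mxE.
by rewrite mulrCA.
Qed.

Lemma ip_ge0 N (v : 'cV[C]_N) : 0 <= ip v v.
Proof.
rewrite ipE; apply: sumr_ge0 => i _; rewrite mulrC; exact: mul_conjC_ge0.
Qed.

Lemma ip_real N (v : 'cV[C]_N) : ip v v = (n2 v)%:C.
Proof.
have := ip_ge0 v; rewrite /n2; case: (ip v v) => a b.
by rewrite lecE /= => /andP[/eqP -> _].
Qed.

Lemma n2_ge0 N (v : 'cV[C]_N) : 0 <= n2 v.
Proof. by rewrite -ler0c -ip_real ip_ge0. Qed.

Lemma ReD (x y : C) : complex.Re (x + y) = complex.Re x + complex.Re y. Proof. by case: x; case: y. Qed.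
Lemma ReN (x : C) : complex.Re (- x) = - complex.Re x. Proof. by case: x. Qed.
Lemma ReB (x y : C) : complex.Re (x - y) = complex.Re x - complex.Re y. Proof. by rewrite ReD ReN. Qed.
Lemma ReMr (a : R) (x : C) : complex.Re (a%:C * x) = a * complex.Re x.
Proof. by case: x => b c /=; rewrite mul0r subr0. Qed.
Lemma ReJ (x : C) : complex.Re (Num.conj x) = complex.Re x. Proof. by case: x. Qed.
Lemma ImJ (x : C) : complex.Im (Num.conj x) = - complex.Im x. Proof. by case: x. Qed.


Definition nsq (z : C) : R := complex.Re (Num.conj z * z).

Lemma Re_sum (I : Type) (r : seq I) (P : pred I) (F : I -> C) :
  complex.Re (\sum_(i <- r | P i) F i) = \sum_(i <- r | P i) complex.Re (F i).
Proof.
apply: (big_ind2 (fun a b => complex.Re a = b)) => //.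
by move=> x1 x2 y1 y2 <- <-; rewrite ReD.
Qed.

Lemma n2E N (v : 'cV[C]_N) : n2 v = \sum_i nsq (v i 0).
Proof. by rewrite /n2 ipE Re_sum. Qed.

Lemma sum_tens m n (F : 'I_(m * n) -> R) :
  \sum_k F k = \sum_(i < m) \sum_(j < n) F (mxtens_index (i, j)).
Proof.
rewrite pair_big /=.
rewrite (reindex (@mxtens_index m n)) /=; last first.
  by exists (@mxtens_unindex m n) => x _; rewrite (mxtens_indexK, mxtens_unindexK).
by apply: eq_bigr => -[i j] _.
Qed.

Lemma sum_tensC m n (F : 'I_(m * n) -> C) :
  \sum_k F k = \sum_(i < m) \sum_(j < n) F (mxtens_index (i, j)).
Proof.
rewrite pair_big /=.
rewrite (reindex (@mxtens_index m n)) /=; last first.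
  by exists (@mxtens_unindex m n) => x _; rewrite (mxtens_indexK, mxtens_unindexK).
by apply: eq_bigr => -[i j] _.
Qed.

Definition blk1 m n (w : 'cV[C]_(m * n)) (i : 'I_m) : 'cV[C]_n :=
  \col_j w (mxtens_index (i, j)) 0.
Definition blk2 m n (w : 'cV[C]_(m * n)) (j : 'I_n) : 'cV[C]_m :=
  \col_i w (mxtens_index (i, j)) 0.

Lemma tens1M_entry m n (M : 'M[C]_n) (w : 'cV[C]_(m * n)) i j :
  ((1%:M *t M) *m w) (mxtens_index (i, j)) 0 = (M *m blk1 w i) j 0.
Proof.
rewrite mxE sum_tensC (bigD1 i) //= [X in _ + X]big1 ?addr0; last first.
  move=> i' ne; apply: big1 => j' _; rewrite tensmxE mxE eq_sym (negbTE ne).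
  by rewrite !mul0r.
rewrite [X in _ = X]mxE; apply: eq_bigr => j' _.
by rewrite tensmxE !mxE eqxx mul1r.
Qed.

Lemma tensM1_entry m n (M : 'M[C]_m) (w : 'cV[C]_(m * n)) i j :
  ((M *t 1%:M) *m w) (mxtens_index (i, j)) 0 = (M *m blk2 w j) i 0.
Proof.
rewrite mxE sum_tensC [X in _ = X]mxE; apply: eq_bigr => i' _.
rewrite (bigD1 j) //= [X in _ + X]big1 ?addr0; last first.
  move=> j' ne; rewrite tensmxE mxE eq_sym (negbTE ne).
  by rewrite mulr0 mul0r.
by rewrite tensmxE !mxE eqxx mulr1.
Qed.

Lemma n2_tens1 m n (M : 'M[C]_n) (c : R) :
  (forall v, n2 (M *m v) <= c * n2 v) ->
  forall w : 'cV[C]_(m * n), n2 ((1%:M *t M) *m w) <= c * n2 w.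
Proof.
move=> H w; rewrite !n2E !sum_tens mulr_sumr; apply: ler_sum => i _.
have := H (blk1 w i); rewrite !n2E => h.
rewrite (eq_bigr (fun j => nsq ((M *m blk1 w i) j 0))); last first.
  by move=> j _; rewrite tens1M_entry.
apply: (le_trans h); rewrite le_eqVlt; apply/orP; left; apply/eqP.
by congr (_ * _); apply: eq_bigr => j _; rewrite mxE.
Qed.

Lemma n2_tens2 m n (M : 'M[C]_m) (c : R) :
  (forall v, n2 (M *m v) <= c * n2 v) ->
  forall w : 'cV[C]_(m * n), n2 ((M *t 1%:M) *m w) <= c * n2 w.
Proof.
move=> H w; rewrite !n2E !sum_tens exchange_big /=.
rewrite [in X in _ <= X]exchange_big /= mulr_sumr.
apply: ler_sum => j _.
have := H (blk2 w j); rewrite !n2E => h.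
rewrite (eq_bigr (fun i => nsq ((M *m blk2 w j) i 0))); last first.
  by move=> i _; rewrite tensM1_entry.
apply: (le_trans h); rewrite le_eqVlt; apply/orP; left; apply/eqP.
by congr (_ * _); apply: eq_bigr => i _; rewrite mxE.
Qed.


Lemma Re_ge0 (z : C) : 0 <= z -> 0 <= complex.Re z.
Proof. by rewrite lecE => /andP[]. Qed.

Lemma psd_ip n (P : 'M[C]_n) : psd P -> forall w, 0 <= complex.Re (ip w (P *m w)).
Proof. by case=> _ h w; apply: Re_ge0; have := h w; rewrite /ip mulmxA. Qed.

Lemma bo_herm n (O : 'M[C]_n) : binary_observable O -> adjmx O = O.
Proof.
case=> P0 [P1 [[h0 _] [h1 _] _ ->]]; by rewrite adjmxB h0 h1.
Qed.

Lemma bo_bounds n (O : 'M[C]_n) : binary_observable O -> forall w,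
  complex.Re (ip w (O *m w)) <= n2 w /\ - n2 w <= complex.Re (ip w (O *m w)).
Proof.
case=> P0 [P1 [p0 p1 hs ->]] w.
have e1 : n2 w = complex.Re (ip w (P0 *m w)) + complex.Re (ip w (P1 *m w)).
  by rewrite /n2 -ReD -ipDr -mulmxDl hs mul1mx.
have e2 : complex.Re (ip w ((P0 - P1) *m w)) =
   complex.Re (ip w (P0 *m w)) - complex.Re (ip w (P1 *m w)).
  by rewrite mulmxBl ipBr ReB.
have := psd_ip p0 w; have := psd_ip p1 w.
rewrite e1 e2; move: (psd_ip p0 w) (psd_ip p1 w); clear; split; lra.
Qed.

Lemma ReipC N (u v : 'cV[C]_N) : complex.Re (ip v u) = complex.Re (ip u v).
Proof. by rewrite ipC ReJ. Qed.

Lemma bo_contr n (O : 'M[C]_n) : binary_observable O ->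
  forall v, n2 (O *m v) <= 1 * n2 v.
Proof.
move=> hO v; have hH := bo_herm hO.
set x := O *m v.
have [b1 _] := bo_bounds hO (x + v).
have [_ b2] := bo_bounds hO (x - v).
have e1 : ip v (O *m x) = ip x x by rewrite /x ipM hH.
have E1 : complex.Re (ip (x + v) (O *m (x + v))) =
   complex.Re (ip x (O *m x)) + n2 x + n2 x + complex.Re (ip v x).
  rewrite mulmxDr !ipDl !ipDr e1 -/x !ReD /n2; ring.
have E2 : complex.Re (ip (x - v) (O *m (x - v))) =
   complex.Re (ip x (O *m x)) - n2 x - n2 x + complex.Re (ip v x).
  rewrite mulmxBr !ipBl !ipBr e1 -/x !ReB /n2; ring.
have E3 : n2 (x + v) = n2 x + n2 v + complex.Re (ip x v) + complex.Re (ip v x).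
  by rewrite /n2 !ipDl !ipDr !ReD; ring.
have E4 : n2 (x - v) = n2 x + n2 v - complex.Re (ip x v) - complex.Re (ip v x).
  by rewrite /n2 !ipBl !ipBr !ReB ?ReD; ring.
rewrite E1 E3 in b1; rewrite E2 E4 in b2.
move: b1 b2; clear; lra.
Qed.

Lemma arith (k X1 X2 X3 X4 U W P1 P2 Q1 Q2 : R) :
  0 <= k -> k < 1 -> 0 <= U -> 0 <= W -> 0 <= P1 -> 0 <= P2 -> 0 <= Q1 -> 0 <= Q2 ->
  U + W <= 4 -> P1 + Q1 <= 4 -> P2 + Q2 <= 4 -> Q1 <= 4 * k ^+ 2 -> Q2 <= 4 * k ^+ 2 ->
  (forall l, 2 * l * X1 <= l ^+ 2 * U + P1) ->
  (forall l, 2 * l * X2 <= l ^+ 2 * W + P2) ->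
  (forall l, 2 * l * X3 <= l ^+ 2 * W + Q1) ->
  (forall l, 2 * l * X4 <= l ^+ 2 * U + Q2) ->
  (X1 + X2 + X3 + X4) / 2 <=
  (if k <= (Num.sqrt 2)^-1 then 2 * Num.sqrt 2 * (k + Num.sqrt (1 - k ^+ 2)) else 4).
Proof.
move=> k0 k1 U0 W0 P10 P20 Q10 Q20 UW PQ1 PQ2 hQ1 hQ2 h1 h2 h3 h4.
set r := Num.sqrt 2; set s := Num.sqrt (1 - k ^+ 2).
have r0 : 0 < r by rewrite sqrtr_gt0 ltr0n.
have r2 : r ^+ 2 = 2 by rewrite sqr_sqrtr // ler0n.
have s0 : 0 <= s by rewrite sqrtr_ge0.
have s2 : s ^+ 2 = 1 - k ^+ 2.
  by rewrite sqr_sqrtr // subr_ge0 expr_le1 // ltW.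
have gen : (X1 + X2 + X3 + X4) / 2 <= 4.
  have := h1 1; have := h2 1; have := h3 1; have := h4 1; lra.
case: ifP => hk; last exact: gen.
have hk2 : k ^+ 2 * 2 <= 1.
  have : k * r <= 1 by rewrite -(mulVf (lt0r_neq0 r0)) ler_wpM2r // ltW.
  move=> h; have : (k * r) ^+ 2 <= 1 by rewrite expr_le1 // mulr_ge0 // ltW.
  by rewrite exprMn r2.
have ks : k <= s.
  have : k ^+ 2 <= s ^+ 2 by lra.
  by rewrite ler_sqr // nnegrE.
have [k00|kpos] := eqVneq k 0.
  rewrite k00 in hQ1 hQ2 *; rewrite expr0n /= mulr0 in hQ1 hQ2.
  have Q1z : Q1 = 0 by lra.
  have Q2z : Q2 = 0 by lra.
  have X3z : X3 <= 0.
    have := h3 (X3 / 4); rewrite Q1z => h; nra.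
  have X4z : X4 <= 0.
    have := h4 (X4 / 4); rewrite Q2z => h; nra.
  have := h1 r; have := h2 r; rewrite r2 => a b.
  have s1 : s = 1 by rewrite /s k00 expr0n /= subr0 sqrtr1.
  rewrite add0r s1 mulr1.
  have : 2 * r * (X1 + X2) <= 16 by lra.
  move=> h.
  have : r * r = 2 by rewrite -expr2.
  nra.
have kp : 0 < k by rewrite lt0r kpos.
have := h1 (r * s); have := h2 (r * s); have := h3 (r * k); have := h4 (r * k).
rewrite !exprMn r2 => d c b a.
have s0' : 0 < s.
  rewrite lt0r s0 andbT; apply/eqP => se; move: s2; rewrite se expr0n /=.
  move=> h; have : k ^+ 2 = 1 by lra.
  by move/eqP; rewrite sqrf_eq1 => /orP[] /eqP; lra.
have f1 := ler_wpM2l k0 a.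
have f2 := ler_wpM2l k0 b.
have f3 := ler_wpM2l s0 c.
have f4 := ler_wpM2l s0 d.
have g1 : k * s ^+ 2 * (U + W) <= k * s ^+ 2 * 4.
  by apply: ler_wpM2l => //; apply: mulr_ge0 => //; apply: sqr_ge0.
have g2 : s * k ^+ 2 * (U + W) <= s * k ^+ 2 * 4.
  by apply: ler_wpM2l => //; apply: mulr_ge0 => //; apply: sqr_ge0.
have g3 : k * (P1 + P2) <= k * (8 - Q1 - Q2).
  by apply: ler_wpM2l => //; lra.
have g4 : (s - k) * (Q1 + Q2) <= (s - k) * (8 * k ^+ 2).
  by apply: ler_wpM2l; lra.
have g5 : k * s ^+ 2 = k - k * k ^+ 2 by rewrite s2; ring.
have T : (2 * k * s) * (r * (X1 + X2 + X3 + X4)) <= (2 * k * s) * (8 * (s + k)).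
  have e : (2 * k * s) * (8 * (s + k)) = 16 * (k * s ^+ 2) + 16 * (s * k ^+ 2).
    by rewrite !expr2; ring.
  rewrite e.
  have e1 : (2 * k * s) * (r * (X1 + X2 + X3 + X4)) =
     k * (2 * (r * s) * X1) + k * (2 * (r * s) * X2) + s * (2 * (r * k) * X3)
     + s * (2 * (r * k) * X4) by ring.
  rewrite e1.
  have e2 : k * (2 * s ^+ 2 * U + P1) + k * (2 * s ^+ 2 * W + P2) +
     s * (2 * k ^+ 2 * W + Q1) + s * (2 * k ^+ 2 * U + Q2) =
     2 * (k * s ^+ 2 * (U + W)) + k * (P1 + P2) + 2 * (s * k ^+ 2 * (U + W))
     + s * (Q1 + Q2) by ring.
  have e3 : (s - k) * (Q1 + Q2) = s * (Q1 + Q2) - k * (Q1 + Q2) by ring.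
  have e4 : (s - k) * (8 * k ^+ 2) = 8 * (s * k ^+ 2) - 8 * (k * k ^+ 2) by ring.
  have e5 : k * (8 - Q1 - Q2) = 8 * k - k * (Q1 + Q2) by ring.
  lra.
have pos : 0 < 2 * k * s by rewrite !mulr_gt0.
rewrite ler_pM2l // in T.
have T2 : r * (r * (X1 + X2 + X3 + X4)) <= r * (8 * (s + k)).
  by apply: ler_wpM2l => //; exact: ltW.
have e : r * (r * (X1 + X2 + X3 + X4)) = 2 * (X1 + X2 + X3 + X4).
  by rewrite mulrA -expr2 r2.
rewrite e in T2.
have e' : r * (8 * (s + k)) = 8 * r * (s + k) by ring.
rewrite e' in T2.
lra.
Qed.

Lemma conjR (l : R) : Num.conj (l%:C) = l%:C.
Proof. by apply/eqP; rewrite eq_complex /= oppr0 !eqxx. Qed.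

Lemma amgm N (x y : 'cV[C]_N) (l : R) :
  2 * l * complex.Re (ip x y) <= l ^+ 2 * n2 x + n2 y.
Proof.
have := n2_ge0 (l%:C *: x - y).
rewrite /n2 ipBl !ipBr !ipZl !ipZr conjR !ReB !ReMr ReipC.
move=> h; rewrite expr2; move: h; clear; lra.
Qed.

Lemma parallel N (x y : 'cV[C]_N) : n2 (x + y) + n2 (x - y) = 2 * n2 x + 2 * n2 y.
Proof.
rewrite /n2 !(ipDl, ipDr, ipNl, ipNr) !(ReD, ReN); ring.
Qed.

Lemma vec_bound N (k : R) (a0 a1 a b c d : 'cV[C]_N) :
  0 <= k -> k < 1 ->
  n2 a0 <= 1 -> n2 a1 <= 1 -> n2 a <= 1 -> n2 b <= 1 -> n2 c <= 1 -> n2 d <= 1 ->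
  n2 (a - c) <= 4 * k ^+ 2 -> n2 (b - d) <= 4 * k ^+ 2 ->
  complex.Re (ip a0 a + ip a0 b + ip a1 c - ip a1 d) <= S_q k.
Proof.
move=> k0 k1 h0 h1 ha hb hc hd hac hbd.
have E : complex.Re (ip a0 a + ip a0 b + ip a1 c - ip a1 d) =
  (complex.Re (ip (a0 + a1) (a + c)) + complex.Re (ip (a0 - a1) (b + d))
   + complex.Re (ip (a0 - a1) (a - c)) + complex.Re (ip (a0 + a1) (b - d))) / 2.
  by rewrite !(ipDl, ipDr, ipNl, ipNr) !(ReD, ReN); field.
rewrite E /S_q.
apply: (@arith k _ _ _ _ (n2 (a0 + a1)) (n2 (a0 - a1)) (n2 (a + c)) (n2 (b + d))
   (n2 (a - c)) (n2 (b - d))) => //; try exact: n2_ge0.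
- by move: (parallel a0 a1) (n2_ge0 a0) (n2_ge0 a1) h0 h1 ha hb hc hd; clear; lra.
- by move: (parallel a c) (n2_ge0 a) (n2_ge0 c) h0 h1 ha hb hc hd; clear; lra.
- by move: (parallel b d) (n2_ge0 b) (n2_ge0 d) h0 h1 ha hb hc hd; clear; lra.
- move=> l; exact: amgm.
- move=> l; exact: amgm.
- move=> l; exact: amgm.
- move=> l; exact: amgm.
Qed.


Lemma tensmxBr m n p q (A : 'M[C]_(m,n)) (X Y : 'M[C]_(p,q)) :
  A *t (X - Y) = A *t X - A *t Y.
Proof. by apply/matrixP => i j; rewrite !mxE mulrBr. Qed.

Lemma expect_ip N (psi : 'cV[C]_N) H : expect psi H = ip psi (H *m psi).
Proof. by rewrite /expect /ip mulmxA. Qed.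

Lemma expect_real N (psi : 'cV[C]_N) H : adjmx H = H ->
  Num.conj (expect psi H) = expect psi H.
Proof. by move=> hH; rewrite !expect_ip -ipC ipM hH. Qed.

Lemma expect_split m n (psi : 'cV[C]_(m * n)) (A : 'M[C]_m) (B : 'M[C]_n) :
  adjmx A = A ->
  expect psi (A *t B) = ip ((A *t 1%:M) *m psi) ((1%:M *t B) *m psi).
Proof.
move=> hA; rewrite expect_ip.
have -> : A *t B = (A *t 1%:M) *m (1%:M *t B) by rewrite tensmx_mul mulmx1 mul1mx.
by rewrite -mulmxA ipM adjmxT hA adjmx1.
Qed.

Lemma opnorm_n2 n (M : 'M[C]_n) (c : R) : 0 <= c -> opnorm_le M c ->
  forall v, n2 (M *m v) <= c ^+ 2 * n2 v.
Proof.
move=> c0 h v; have := h v; rewrite /vnorm -/(ip _ _) -/(ip _ _) -/(n2 _) -/(n2 _).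
move=> hv.
have : (Num.sqrt (n2 (M *m v))) ^+ 2 <= (c * Num.sqrt (n2 v)) ^+ 2.
  by rewrite ler_sqr // nnegrE ?sqrtr_ge0 // mulr_ge0 // sqrtr_ge0.
by rewrite exprMn !sqr_sqrtr // n2_ge0.
Qed.

End Q.

Section Q.
Variable R : rcfType.
Local Notation C := R[i].

Lemma ord2 (i : 'I_2) : i = 0 \/ i = 1.
Proof. case: i => [[|[|i]] Hi]; [left|right|by []]; exact: val_inj. Qed.

Lemma sxx : sigma_x R *m sigma_x R = 1%:M.
Proof.
apply/matrixP => i j; case: (ord2 i) => ->; case: (ord2 j) => ->;
by rewrite !mxE !big_ord_recl big_ord0 !mxE /=; simpc.
Qed.
Lemma szz : sigma_z R *m sigma_z R = 1%:M.
Proof.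
apply/matrixP => i j; case: (ord2 i) => ->; case: (ord2 j) => ->;
by rewrite !mxE !big_ord_recl big_ord0 !mxE /=; simpc.
Qed.
Lemma sxz : sigma_x R *m sigma_z R = - (sigma_z R *m sigma_x R).
Proof.
apply/matrixP => i j; case: (ord2 i) => ->; case: (ord2 j) => ->;
by rewrite !mxE !big_ord_recl !big_ord0 !mxE /=; ring.
Qed.
Lemma hx : adjmx (sigma_x R) = sigma_x R.
Proof.
apply/matrixP => i j; case: (ord2 i) => ->; case: (ord2 j) => ->;
by rewrite !mxE /= ?rmorph0 ?rmorph1 ?rmorphN ?rmorph1.
Qed.
Lemma hz : adjmx (sigma_z R) = sigma_z R.
Proof.
apply/matrixP => i j; case: (ord2 i) => ->; case: (ord2 j) => ->;
by rewrite !mxE /= ?rmorph0 ?rmorphN ?rmorph1.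
Qed.

Lemma adjZ m n c (M : 'M[C]_(m,n)) : adjmx (c *: M) = Num.conj c *: adjmx M.
Proof. by apply/matrixP => i j; rewrite !mxE rmorphM. Qed.

Lemma psd_half n (T : 'M[C]_n) (c : C) :
  adjmx T = T -> T *m T = T + T -> Num.conj c = c -> 0 <= c -> c + c = 1 ->
  psd (c *: T).
Proof.
move=> hT hTT cc c0 c2; split; first by change (adjmx (c *: T) = c *: T); rewrite adjZ cc hT.
move=> v; rewrite -mulmxA -scalemxAl -scalemxAr mxE mulmxA -/(ip v (T *m v)).
rewrite -mulmxA -/(ip v (T *m v)).
apply: mulr_ge0 => //.
have e : ip (T *m v) (T *m v) = ip v (T *m v) + ip v (T *m v).
  by rewrite ipM hT mulmxA hTT mulmxDl ipDr.
have -> : ip v (T *m v) = c * ip (T *m v) (T *m v).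
  by rewrite e mulrDr -mulrDl c2 mul1r.
by apply: mulr_ge0 => //; apply: ip_ge0.
Qed.

Lemma bo_of n (O : 'M[C]_n) : adjmx O = O -> O *m O = 1%:M -> binary_observable O.
Proof.
move=> hO hOO.
pose c : C := 2^-1.
have c2 : c + c = 1.
  by rewrite /c; field.
have cc : Num.conj c = c by rewrite /c fmorphV /= rmorph_nat.
have c0 : 0 <= c by rewrite /c invr_ge0 ler0n.
exists (c *: (1%:M + O)), (c *: (1%:M - O)); split.
- apply: psd_half => //; first by rewrite adjmxD adjmx1 hO.
  by rewrite mulmxDl !mulmxDr !mul1mx !mulmx1 hOO [O + 1%:M]addrC.
- apply: psd_half => //; first by rewrite adjmxB adjmx1 hO.
  rewrite mulmxBl !mulmxBr !mul1mx !mulmx1 hOO.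
  by rewrite opprB.
- by rewrite -scalerDr addrACA subrr addr0 scalerDr -scalerDl c2 scale1r.
- by apply/matrixP => i j; rewrite !mxE /c; field.
Qed.

Lemma opn_of n (M : 'M[C]_n) (d c : R) : adjmx M = M -> M *m M = d%:C *: 1%:M ->
  0 <= d -> 0 <= c -> d <= c ^+ 2 -> opnorm_le M c.
Proof.
move=> hM hMM d0 c0 dc v; rewrite /vnorm -/(ip _ _) -/(ip _ _) -/(n2 _) -/(n2 _).
have -> : n2 (M *m v) = d * n2 v.
  rewrite /n2 ipM hM mulmxA hMM -scalemxAl mul1mx ipZr; by case: (ip v v) => x y /=; rewrite mul0r subr0.
rewrite sqrtrM // ler_wpM2r ?sqrtr_ge0 //.
have : Num.sqrt d <= Num.sqrt (c ^+ 2) by rewrite ler_sqrt // sqr_ge0.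
by rewrite sqrtr_sqr ger0_norm.
Qed.

Definition Mab (a b : R) : 'M[C]_2 := a%:C *: sigma_x R + b%:C *: sigma_z R.

Lemma herm_Mab a b : adjmx (Mab a b) = Mab a b.
Proof. by rewrite /Mab adjmxD !adjZ !conjR hx hz. Qed.

Lemma sq_Mab a b : Mab a b *m Mab a b = (a ^+ 2 + b ^+ 2)%:C *: 1%:M.
Proof.
apply/matrixP => i j; case: (ord2 i) => ->; case: (ord2 j) => ->;
by rewrite !mxE !big_ord_recl !big_ord0 !mxE /= rmorphD !rmorphXn /=; ring.
Qed.

Lemma Mab_sub a b a' b' : Mab a b - Mab a' b' = Mab (a - a') (b - b').
Proof. by apply/matrixP => i j; rewrite !mxE !rmorphB /=; ring. Qed.

Lemma Mab_z : Mab 0 1 = sigma_z R.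
Proof. by rewrite /Mab rmorph0 rmorph1 scale0r add0r scale1r. Qed.
Lemma Mab_x : Mab 1 0 = sigma_x R.
Proof. by rewrite /Mab rmorph0 rmorph1 scale0r addr0 scale1r. Qed.
Lemma Mab_nx : Mab (-1) 0 = - sigma_x R.
Proof. by rewrite /Mab rmorph0 rmorphN rmorph1 scale0r addr0 scaleN1r. Qed.

Lemma bo_Mab a b : a ^+ 2 + b ^+ 2 = 1 -> binary_observable (Mab a b).
Proof.
move=> h; apply: bo_of; first exact: herm_Mab.
by rewrite sq_Mab h rmorph1 scale1r.
Qed.


Lemma opn_Mab a b a' b' c : 0 <= c -> (a - a') ^+ 2 + (b - b') ^+ 2 <= c ^+ 2 ->
  opnorm_le (Mab a b - Mab a' b') c.
Proof.
move=> c0 h; rewrite Mab_sub; apply: (opn_of _ (sq_Mab _ _)) => //.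
  exact: herm_Mab.
by rewrite addr_ge0 // sqr_ge0.
Qed.

Lemma ket_entry (A : 'M[C]_2) i j : adjmx (ket R i) *m A *m ket R j = (A i j)%:M.
Proof.
have l1 : (lift ord0 ord0 : 'I_2) = 1 by apply: val_inj.
have l0 : (ord0 : 'I_2) = 0 by apply: val_inj.
apply/matrixP => a b; rewrite [a]ord1 [b]ord1.
case: (ord2 i) => ->; case: (ord2 j) => ->;
rewrite /adjmx /ket; do !(rewrite !mxE || rewrite !big_ord_recl || rewrite !big_ord0); rewrite /= ?rmorph0 ?rmorph1;
by rewrite ?l1 ?l0 mulr1n; ring.
Qed.

Lemma tens11 (x y : C) : ((x%:M : 'M_1) *t (y%:M : 'M_1)) 0 0 = x * y.
Proof. by rewrite !mxE !eqxx !mulr1n. Qed.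

Lemma term2 (A B : 'M[C]_2) i j :
  (adjmx (ket R i *t ket R i) *m (A *t B) *m (ket R j *t ket R j)) 0 0 = A i j * B i j.
Proof.
rewrite (adjmxT (ket R i) (ket R i)).
rewrite (tensmx_mul (adjmx (ket R i)) (adjmx (ket R i)) A B).
rewrite (tensmx_mul (adjmx (ket R i) *m A) (adjmx (ket R i) *m B) (ket R j) (ket R j)).
by rewrite !ket_entry tens11.
Qed.

End Q.

Section Q.
Variable R : rcfType.
Local Notation C := R[i].
Lemma addE00 m (X Y : 'M[C]_(m, 1)) (i : 'I_m) : (X + Y) i 0 = X i 0 + Y i 0.
Proof. by rewrite mxE. Qed.
Lemma scaleE00 m c (X : 'M[C]_(m, 1)) (i : 'I_m) : (c *: X) i 0 = c * X i 0.
Proof. by rewrite mxE. Qed.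
Lemma expand4 N (x y : 'cV[C]_N) H :
  (adjmx (x + y) *m H *m (x + y)) 0 0 =
  (adjmx x *m H *m x) 0 0 + (adjmx x *m H *m y) 0 0 +
  (adjmx y *m H *m x) 0 0 + (adjmx y *m H *m y) 0 0.
Proof. by rewrite adjmxD !mulmxDl !mulmxDr !addE00 addrA. Qed.

Lemma expect_phi (A B : 'M[C]_2) : expect (phi_plus R) (A *t B) =
  2^-1 * (A 0 0 * B 0 0 + A 0 1 * B 0 1 + A 1 0 * B 1 0 + A 1 1 * B 1 1).
Proof.
rewrite /expect /phi_plus adjZ -scalemxAl -scalemxAl -scalemxAr scalerA.
rewrite scaleE00 expand4 (term2 A B 0 0) (term2 A B 0 1) (term2 A B 1 0) (term2 A B 1 1).
rewrite conjR -rmorphM /=.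
have -> : ((Num.sqrt 2)^-1 * (Num.sqrt 2)^-1 : R) = 2^-1.
  by rewrite -invfM -expr2 sqr_sqrtr // ler0n.
rewrite fmorphV /= rmorph_nat; ring.
Qed.

Lemma tens11_id : ((1%:M : 'M[C]_2) *t (1%:M : 'M[C]_2)) = 1%:M.
Proof.
apply/matrixP => p q; case: (mxtens_indexP p) => i0 i1; case: (mxtens_indexP q) => j0 j1.
rewrite tensmxE !mxE (inj_eq (can_inj (@mxtens_indexK _ _))) xpair_eqE.
by rewrite -natrM mulnb.
Qed.

Lemma unit_phi : unit_vector (phi_plus R).
Proof.
rewrite /unit_vector -[X in (_ *m X)]mul1mx mulmxA -tens11_id -/(expect _ _).
by rewrite expect_phi !mxE /= ?mulr1n ?mulr0n; field.
Qed.

Lemma E_Z (a b : R) :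
  expect (phi_plus R) (sigma_z R *t (a%:C *: sigma_x R + b%:C *: sigma_z R)) = b%:C.
Proof. by rewrite expect_phi !mxE /=; field. Qed.

Lemma E_X (a b : R) :
  expect (phi_plus R) (sigma_x R *t (a%:C *: sigma_x R + b%:C *: sigma_z R)) = a%:C.
Proof. by rewrite expect_phi !mxE /=; field. Qed.

End Q.

Section Q.
Variable R : rcfType.
Local Notation C := R[i].
Lemma upper (k : R) (hk0 : 0 <= k) (hk1 : k < 1) (m n : nat)
  (psi : 'cV[C]_(m * n)) (A0 A1 : 'M[C]_m) (B : bool -> bool -> 'M[C]_n) :
      unit_vector psi ->
      binary_observable A0 -> binary_observable A1 ->
      (forall y x, binary_observable (B y x)) ->
      (forall y, opnorm_le (B y false - B y true) (2 * k)) ->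
      S_val psi A0 A1 B <= (S_q k)%:C.
Proof.
move=> hu hA0 hA1 hB hD.
have npsi : n2 psi = 1 by rewrite /n2 /ip hu.
have hA0' := bo_herm hA0; have hA1' := bo_herm hA1.
have hB' y x := bo_herm (hB y x).
have cA (A : 'M[C]_m) : binary_observable A -> n2 ((A *t 1%:M) *m psi) <= 1.
  by move=> hA; have := n2_tens2 (bo_contr hA) psi; rewrite npsi mulr1.
have cB y x : n2 ((1%:M *t B y x) *m psi) <= 1.
  by have := n2_tens1 (m := m) (bo_contr (hB y x)) psi; rewrite npsi mulr1.
have cD y : n2 ((1%:M *t B y false) *m psi - (1%:M *t B y true) *m psi) <= 4 * k ^+ 2.
  rewrite -mulmxBl -tensmxBr.
  have k2 : 0 <= 2 * k by rewrite mulr_ge0.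
  have := n2_tens1 (m := m) (opnorm_n2 k2 (hD y)) psi.
  rewrite npsi mulr1 exprMn => h; apply: (le_trans h).
  by rewrite (_ : (2:R) ^+ 2 = 4) // expr2 -natrM.
have ES : S_val psi A0 A1 B =
  ip ((A0 *t 1%:M) *m psi) ((1%:M *t B false false) *m psi)
  + ip ((A0 *t 1%:M) *m psi) ((1%:M *t B true false) *m psi)
  + ip ((A1 *t 1%:M) *m psi) ((1%:M *t B false true) *m psi)
  - ip ((A1 *t 1%:M) *m psi) ((1%:M *t B true true) *m psi).
  by rewrite /S_val !expect_split.
have Sreal : Num.conj (S_val psi A0 A1 B) = S_val psi A0 A1 B.
  rewrite /S_val !(rmorphD, rmorphN) /= !expect_real //;
  by rewrite adjmxT ?hA0' ?hA1' hB'.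
rewrite lecE; apply/andP; split.
  apply/eqP; move: Sreal; case: (S_val psi A0 A1 B) => x y /= [] h.
  by move: h; clear; lra.
rewrite ES /=.
apply: vec_bound => //; try exact: cA; try exact: cB; exact: cD.
Qed.

End Q.

Section Q.
Variable R : rcfType.
Local Notation C := R[i].

Lemma E_ZZ : expect (phi_plus R) (sigma_z R *t sigma_z R) = 1.
Proof. by rewrite expect_phi !mxE /=; field. Qed.
Lemma E_XX : expect (phi_plus R) (sigma_x R *t sigma_x R) = 1.
Proof. by rewrite expect_phi !mxE /=; field. Qed.
Lemma E_XnX : expect (phi_plus R) (sigma_x R *t - sigma_x R) = -1.
Proof. by rewrite expect_phi !mxE /=; field. Qed.

Lemma attain (k : R) (hk0 : 0 <= k) (hk1 : k < 1) :
  [/\ unit_vector (phi_plus R),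
      binary_observable (sigma_z R) /\ binary_observable (sigma_x R),
      (forall y x, binary_observable (B_opt k y x)),
      (forall y, opnorm_le (B_opt k y false - B_opt k y true) (2 * k))
    & S_val (phi_plus R) (sigma_z R) (sigma_x R) (B_opt k) = (S_q k)%:C].
Proof.
set r := Num.sqrt (2 : R); set s := Num.sqrt (1 - k ^+ 2).
have r0 : 0 < r by rewrite sqrtr_gt0 ltr0n.
have r2 : r ^+ 2 = 2 by rewrite sqr_sqrtr // ler0n.
have rn : r != 0 by rewrite gt_eqF.
have s0 : 0 <= s by rewrite sqrtr_ge0.
have s2 : s ^+ 2 = 1 - k ^+ 2.
  by rewrite sqr_sqrtr // subr_ge0 expr_le1 // ltW.
have k2 : 0 <= 2 * k by rewrite mulr_ge0.
split.
- exact: unit_phi.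
- by split; apply: bo_of; [exact: hz | exact: szz | exact: hx | exact: sxx].
- move=> y x; rewrite /B_opt -/r -/s; case: ifP => hk; case: y; case: x => /=.
  all: try (apply: bo_Mab; rewrite !expr_div_n r2; lra).
  + by rewrite -Mab_nx; apply: bo_Mab; lra.
  + by rewrite -Mab_z; apply: bo_Mab; lra.
  + by rewrite -Mab_x; apply: bo_Mab; lra.
  + by rewrite -Mab_z; apply: bo_Mab; lra.
- move=> y; rewrite /B_opt -/r -/s; case: ifP => hk; case: y => /=.
  + change (opnorm_le (Mab ((k - s) / r) ((k + s) / r) - Mab ((- k - s) / r) ((- k + s) / r)) (2 * k)).
    apply: opn_Mab => //.
    rewrite -!mulrBl !expr_div_n r2; lra.
  + change (opnorm_le (Mab ((- k + s) / r) ((k + s) / r) - Mab ((k + s) / r) ((- k + s) / r)) (2 * k)).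
    apply: opn_Mab => //.
    rewrite -!mulrBl !expr_div_n r2; lra.
  + rewrite -Mab_z -Mab_nx; apply: opn_Mab => //.
    have h : r^-1 < k by rewrite ltNge hk.
    have h1 : 1 < k * r by move: h; rewrite -(ltr_pM2r r0) mulVf.
    have h2 : 1 < (k * r) * (k * r) by nra.
    rewrite exprMn; move: h2; rewrite mulrACA -!expr2 r2; lra.
  + rewrite -Mab_z -Mab_x; apply: opn_Mab => //.
    have h : r^-1 < k by rewrite ltNge hk.
    have h1 : 1 < k * r by move: h; rewrite -(ltr_pM2r r0) mulVf.
    have h2 : 1 < (k * r) * (k * r) by nra.
    rewrite exprMn; move: h2; rewrite mulrACA -!expr2 r2; lra.
- rewrite /S_val /S_q /B_opt -/r -/s; case: ifP => hk /=.
  + rewrite !E_Z !E_X -!rmorphD -rmorphB; congr (_%:C).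
    rewrite (_ : 2 * r * (k + s) = 2 * r ^+ 2 * (k + s) / r); last by field; exact: rn.
    by rewrite r2; field; exact: rn.
  + by rewrite E_ZZ E_XX E_XnX; field.
Qed.
End Q.

Unset Implicit Arguments.

Theorem mainTheorem10 (R : rcfType) (k : R) (hk0 : 0 <= k) (hk1 : k < 1) :
  (* S_q k is an upper bound for S over all admissible strategies ... *)
  (forall (m n : nat) (psi : 'cV[R[i]]_(m * n)) (A0 A1 : 'M[R[i]]_m)
          (B : bool -> bool -> 'M[R[i]]_n),
      unit_vector psi ->
      binary_observable A0 -> binary_observable A1 ->
      (forall y x, binary_observable (B y x)) ->
      (forall y, opnorm_le (B y false - B y true) (2 * k)) ->
      S_val psi A0 A1 B <= (S_q k)%:C)
  /\
  (* ... and it is attained by the explicit strategy, hence is the supremum. *)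
  [/\ unit_vector (phi_plus R),
      binary_observable (sigma_z R) /\ binary_observable (sigma_x R),
      (forall y x, binary_observable (B_opt k y x)),
      (forall y, opnorm_le (B_opt k y false - B_opt k y true) (2 * k))
    & S_val (phi_plus R) (sigma_z R) (sigma_x R) (B_opt k) = (S_q k)%:C].
Proof.
split.
- by move=> m n psi A0 A1 B; apply: upper.
- exact: attain.
Qed.
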